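(* If $\Delta;\Gamma\vdash M:A$ and $\Delta\vdash M\triangleright^*N$ in DCC, then $M^\circ\triangleright^*N^\circ$ in CC.
   Context: DCC: expressions $x\mid U_i\mid\Pi x{:}A.B\mid L@M\mid\ell_i\{\overline M\}$; label contexts $\Delta::=\cdot\mid\Delta,\ell_i(\{\overline x{:}\overline A\},x{:}A\mapsto L:B)$; substitution with $\ell\{\overline M\}[N/x]=\ell\{\overline{M[N/x]}\}$; reduction $\Delta\vdash\ell\{\overline M\}@N\triangleright L[\overline M/\overline x,N/x]$ when $\ell(\{\overline x{:}\overline A\},x{:}A\mapsto L:B)\in\Delta$, $\triangleright^*$ zero or more steps; typing $\Delta;\Gamma\vdash M:A$ by CC-style rules for variables, $U_i:U_{i+1}$, $\Pi$, application $M@N:B[N/x]$, conversion, plus: if $\Delta;\Gamma$ well formed, $\ell(\{\overline x{:}\overline A\},x{:}A\mapsto M:B)\in\Delta$, $|\overline M|=|\overline x|$, $\Delta;\Gamma\vdash M_k:A_k[M_1/x_1,\dots,M_{k-1}/x_{k-1}]$ for all $k$, then $\Delta;\Gamma\vdash\ell\{\overline M\}:\Pi x{:}A[\overline M/\overline x].B[\overline M/\overline x]$. CC: expressions $x\mid U_i\mid\Pi x{:}A.B\mid L\,M\mid\lambda x{:}A.M$, reduction $(\lambda x{:}A.N)\,M\triangleright N[M/x]$. Backward transformation (relative to $\Delta$, on well-typed terms): $x^\circ=x$, $U_i^\circ=U_i$, $(\Pi x{:}A.B)^\circ=\Pi x{:}A^\circ.B^\circ$, $(M@N)^\circ=M^\circ\,N^\circ$,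 $(\ell\{\overline M\})^\circ=\lambda x{:}A^\circ[\overline{M^\circ}/\overline x].\,L^\circ[\overline{M^\circ}/\overline x]$ where $\ell(\{\overline x{:}\overline A\},x{:}A\mapsto L:B)\in\Delta$. *)

(* Defs.v *)
(* DCC (defunctionalized CC with label contexts) and CC,
   locally nameless via de Bruijn indices (index 0 = innermost binder;
   a context is a list of types, head = most recent binding). *)
From Stdlib Require Import List Arith Relations.
Import ListNotations.

Inductive cterm : Type :=
| CVar : nat -> cterm
| CU   : nat -> cterm
| CPi  : cterm -> cterm -> cterm
| CApp : cterm -> cterm -> cterm
| CLam : cterm -> cterm -> cterm.

Definition uprn (xi : nat -> nat) : nat -> nat :=
  fun n => match n with 0 => 0 | S k => S (xi k) end.

Fixpoint cren (xi : nat -> nat) (t : cterm) : cterm :=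
  match t with
  | CVar n => CVar (xi n)
  | CU i => CU i
  | CPi A B => CPi (cren xi A) (cren (uprn xi) B)
  | CApp M N => CApp (cren xi M) (cren xi N)
  | CLam A M => CLam (cren xi A) (cren (uprn xi) M)
  end.

Definition cup (s : nat -> cterm) : nat -> cterm :=
  fun n => match n with 0 => CVar 0 | S k => cren S (s k) end.

Fixpoint csubst (s : nat -> cterm) (t : cterm) : cterm :=
  match t with
  | CVar n => s n
  | CU i => CU i
  | CPi A B => CPi (csubst s A) (csubst (cup s) B)
  | CApp M N => CApp (csubst s M) (csubst s N)
  | CLam A M => CLam (csubst s A) (csubst (cup s) M)
  end.

Definition cbeta (N : cterm) : nat -> cterm :=
  fun n => match n with 0 => N | S k => CVar k end.

(* simultaneous substitution of Ms = [M_1;...;M_n] for x_1..x_n, where x_n is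
   index 0 and x_1 is index n-1; free indices >= n are shifted down by n. *)
Definition csig (Ms : list cterm) : nat -> cterm :=
  fun k => nth k (rev Ms) (CVar (k - length Ms)).

Inductive cstep : cterm -> cterm -> Prop :=
| cs_beta : forall A M N, cstep (CApp (CLam A M) N) (csubst (cbeta N) M)
| cs_pi1 : forall A A' B, cstep A A' -> cstep (CPi A B) (CPi A' B)
| cs_pi2 : forall A B B', cstep B B' -> cstep (CPi A B) (CPi A B')
| cs_app1 : forall M M' N, cstep M M' -> cstep (CApp M N) (CApp M' N)
| cs_app2 : forall M N N', cstep N N' -> cstep (CApp M N) (CApp M N')
| cs_lam1 : forall A A' M, cstep A A' -> cstep (CLam A M) (CLam A' M)
| cs_lam2 : forall A M M', cstep M M' -> cstep (CLam A M) (CLam A M').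

Definition cstar : cterm -> cterm -> Prop := clos_refl_trans cterm cstep.

Definition label := nat.

Inductive dterm : Type :=
| DVar : nat -> dterm
| DU   : nat -> dterm
| DPi  : dterm -> dterm -> dterm
| DApp : dterm -> dterm -> dterm
| DLab : label -> list dterm -> dterm.

(* label declaration  l({x_1:A_1,...,x_n:A_n}, x:A |-> L : B).
   A_k lives in context x_1..x_{k-1}; A in x_1..x_n; L and B in x_1..x_n,x. *)
Record lentry : Type := mkLentry {
  lArgs  : list dterm;
  lArgTy : dterm;
  lBody  : dterm;
  lResTy : dterm
}.

(* label context; head = most recently added declaration *)
Definition lctx := list (label * lentry).

Fixpoint lookup (D : lctx) (l : label) : option lentry :=
  match D with
  | [] => None
  | (l', e) :: D' => if Nat.eqb l l' then Some e else lookup D' l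
  end.

Fixpoint dren (xi : nat -> nat) (t : dterm) : dterm :=
  match t with
  | DVar n => DVar (xi n)
  | DU i => DU i
  | DPi A B => DPi (dren xi A) (dren (uprn xi) B)
  | DApp M N => DApp (dren xi M) (dren xi N)
  | DLab l Ms => DLab l (map (dren xi) Ms)
  end.

Definition dup (s : nat -> dterm) : nat -> dterm :=
  fun n => match n with 0 => DVar 0 | S k => dren S (s k) end.

Fixpoint dsubst (s : nat -> dterm) (t : dterm) : dterm :=
  match t with
  | DVar n => s n
  | DU i => DU i
  | DPi A B => DPi (dsubst s A) (dsubst (dup s) B)
  | DApp M N => DApp (dsubst s M) (dsubst s N)
  | DLab l Ms => DLab l (map (dsubst s) Ms)
  end.

Definition dbeta (N : dterm) : nat -> dterm :=
  fun n => match n with 0 => N | S k => DVar k end.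

Definition dsig (Ms : list dterm) : nat -> dterm :=
  fun k => nth k (rev Ms) (DVar (k - length Ms)).

Inductive dstep (D : lctx) : dterm -> dterm -> Prop :=
| ds_lab : forall l e Ms N, lookup D l = Some e ->
    dstep D (DApp (DLab l Ms) N) (dsubst (dsig (Ms ++ [N])) (lBody e))
| ds_pi1 : forall A A' B, dstep D A A' -> dstep D (DPi A B) (DPi A' B)
| ds_pi2 : forall A B B', dstep D B B' -> dstep D (DPi A B) (DPi A B')
| ds_app1 : forall M M' N, dstep D M M' -> dstep D (DApp M N) (DApp M' N)
| ds_app2 : forall M N N', dstep D N N' -> dstep D (DApp M N) (DApp M N')
| ds_lab_arg : forall l Ms1 M M' Ms2, dstep D M M' ->
    dstep D (DLab l (Ms1 ++ M :: Ms2)) (DLab l (Ms1 ++ M' :: Ms2)).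

Definition dstar (D : lctx) : dterm -> dterm -> Prop :=
  clos_refl_trans dterm (dstep D).

Definition dconv (D : lctx) : dterm -> dterm -> Prop :=
  clos_refl_sym_trans dterm (dstep D).

Inductive wf_lctx : lctx -> Prop :=
| wfl_nil : wf_lctx []
| wfl_cons : forall D l e,
    wf_lctx D ->
    lookup D l = None ->
    wf_ctx D (lArgTy e :: rev (lArgs e)) ->
    dtyped D (lArgTy e :: rev (lArgs e)) (lBody e) (lResTy e) ->
    wf_lctx ((l, e) :: D)
with wf_ctx : lctx -> list dterm -> Prop :=
| wfc_nil : forall D, wf_lctx D -> wf_ctx D []
| wfc_cons : forall D G A i, wf_ctx D G -> dtyped D G A (DU i) -> wf_ctx D (A :: G)
with dtyped : lctx -> list dterm -> dterm -> dterm -> Prop :=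
| ty_var : forall D G n A, wf_ctx D G -> nth_error G n = Some A ->
    dtyped D G (DVar n) (dren (fun k => k + S n) A)
| ty_univ : forall D G i, wf_ctx D G -> dtyped D G (DU i) (DU (S i))
| ty_pi : forall D G A B i j, dtyped D G A (DU i) -> dtyped D (A :: G) B (DU j) ->
    dtyped D G (DPi A B) (DU (Nat.max i j))
| ty_app : forall D G M N A B, dtyped D G M (DPi A B) -> dtyped D G N A ->
    dtyped D G (DApp M N) (dsubst (dbeta N) B)
| ty_conv : forall D G M A B i, dtyped D G M A -> dtyped D G B (DU i) ->
    dconv D A B -> dtyped D G M B
| ty_lab : forall D G l e Ms, wf_ctx D G -> lookup D l = Some e ->
    length Ms = length (lArgs e) ->
    (forall k, k < length Ms ->
       dtyped D G (nth k Ms (DU 0))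
         (dsubst (dsig (firstn k Ms)) (nth k (lArgs e) (DU 0)))) ->
    dtyped D G (DLab l Ms)
      (DPi (dsubst (dsig Ms) (lArgTy e)) (dsubst (dup (dsig Ms)) (lResTy e))).

Fixpoint bgo (h : label -> list cterm -> cterm) (t : dterm) : cterm :=
  match t with
  | DVar n => CVar n
  | DU i => CU i
  | DPi A B => CPi (bgo h A) (bgo h B)
  | DApp M N => CApp (bgo h M) (bgo h N)
  | DLab l Ms => h l (map (bgo h) Ms)
  end.

(* Unknown labels (never
   occurring in well-typed terms) are sent to an arbitrary closed term. *)
Fixpoint bhandler (D : lctx) : label -> list cterm -> cterm :=
  match D with
  | [] => fun _ _ => CU 0
  | (l', e) :: D' => fun l Ms =>
      if Nat.eqb l l'
      then CLam (csubst (csig Ms) (bgo (bhandler D') (lArgTy e)))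
                (csubst (cup (csig Ms)) (bgo (bhandler D') (lBody e)))
      else bhandler D' l Ms
  end.

Definition bt (D : lctx) : dterm -> cterm := bgo (bhandler D).

(* Main.v *)
Require Import Defs.
From Stdlib Require Import List Arith Relations Lia.
Import ListNotations.

Lemma cren_ext : forall t xi zeta, (forall k, xi k = zeta k) -> cren xi t = cren zeta t.
Proof.
  induction t; intros xi zeta H; simpl; f_equal; auto;
  (apply IHt2 || apply IHt1 || idtac); intros [|k]; simpl; auto.
Qed.

Lemma csubst_ext : forall t s r, (forall k, s k = r k) -> csubst s t = csubst r t.
Proof.
  induction t; intros s r H; simpl; f_equal; auto;
  (apply IHt2 || apply IHt1 || idtac); intros [|k]; simpl; auto; rewrite H; auto.
Qed.

Lemma cren_var : forall t xi, cren xi t = csubst (fun k => CVar (xi k)) t.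
Proof.
  induction t; intros xi; simpl; f_equal; auto;
  (rewrite IHt2 || rewrite IHt1); apply csubst_ext; intros [|k]; reflexivity.
Qed.

Lemma csubst_cren : forall t s xi, csubst s (cren xi t) = csubst (fun k => s (xi k)) t.
Proof.
  induction t; intros s xi; simpl; f_equal; auto;
  (rewrite IHt2 || rewrite IHt1); apply csubst_ext; intros [|k]; reflexivity.
Qed.

Lemma cren_cren : forall t xi zeta, cren xi (cren zeta t) = cren (fun k => xi (zeta k)) t.
Proof.
  induction t; intros xi zeta; simpl; f_equal; auto;
  (rewrite IHt2 || rewrite IHt1); apply cren_ext; intros [|k]; reflexivity.
Qed.

Lemma cren_csubst : forall t xi s, cren xi (csubst s t) = csubst (fun k => cren xi (s k)) t.
Proof.
  induction t; intros xi s; simpl; f_equal; auto;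
  (rewrite IHt2 || rewrite IHt1); apply csubst_ext; intros [|k]; simpl; auto;
  rewrite !cren_cren; apply cren_ext; reflexivity.
Qed.

Lemma csubst_csubst : forall t s r, csubst s (csubst r t) = csubst (fun k => csubst s (r k)) t.
Proof.
  induction t; intros s r; simpl; f_equal; auto;
  (rewrite IHt2 || rewrite IHt1); apply csubst_ext; intros [|k]; simpl; auto;
  rewrite csubst_cren, cren_csubst; apply csubst_ext; reflexivity.
Qed.

Lemma csubst_id : forall t, csubst CVar t = t.
Proof.
  induction t; simpl; f_equal; auto;
  [rewrite <- IHt2 at 2 | rewrite <- IHt2 at 2]; apply csubst_ext; intros [|k]; reflexivity.
Qed.

Lemma cstep_subst : forall t u, cstep t u -> forall s, cstep (csubst s t) (csubst s u).
Proof.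
  induction 1; intros s; simpl; try (constructor; auto; fail).
  replace (csubst s (csubst (cbeta N) M)) with (csubst (cbeta (csubst s N)) (csubst (cup s) M)).
  - constructor.
  - rewrite !csubst_csubst; apply csubst_ext; intros [|k]; simpl; auto.
    rewrite csubst_cren; simpl. apply csubst_id.
Qed.

Lemma cstar_map : forall (f : cterm -> cterm), (forall x y, cstep x y -> cstep (f x) (f y)) ->
  forall x y, cstar x y -> cstar (f x) (f y).
Proof.
  intros f Hf x y H; induction H.
  - apply rt_step; auto.
  - apply rt_refl.
  - eapply rt_trans; eauto.
Qed.

Lemma cstar_pi : forall A A' B B', cstar A A' -> cstar B B' -> cstar (CPi A B) (CPi A' B').
Proof.
  intros. apply rt_trans with (CPi A' B).
  - apply (cstar_map (fun x => CPi x B)); auto; intros; constructor; auto.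
  - apply (cstar_map (fun x => CPi A' x)); auto; intros; constructor; auto.
Qed.

Lemma cstar_app : forall A A' B B', cstar A A' -> cstar B B' -> cstar (CApp A B) (CApp A' B').
Proof.
  intros. apply rt_trans with (CApp A' B).
  - apply (cstar_map (fun x => CApp x B)); auto; intros; constructor; auto.
  - apply (cstar_map (fun x => CApp A' x)); auto; intros; constructor; auto.
Qed.

Lemma cstar_lam : forall A A' B B', cstar A A' -> cstar B B' -> cstar (CLam A B) (CLam A' B').
Proof.
  intros. apply rt_trans with (CLam A' B).
  - apply (cstar_map (fun x => CLam x B)); auto; intros; constructor; auto.
  - apply (cstar_map (fun x => CLam A' x)); auto; intros; constructor; auto.
Qed.

Lemma cstar_ren : forall x y xi, cstar x y -> cstar (cren xi x) (cren xi y).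
Proof.
  intros x y xi; apply (cstar_map (cren xi)); intros; rewrite !cren_var; apply cstep_subst; auto.
Qed.

Lemma cstar_subst_pt : forall t s r, (forall k, cstar (s k) (r k)) -> cstar (csubst s t) (csubst r t).
Proof.
  induction t; intros s r H; simpl.
  - apply H.
  - apply rt_refl.
  - apply cstar_pi; auto. apply IHt2; intros [|k]; simpl; [apply rt_refl | apply cstar_ren, H].
  - apply cstar_app; auto.
  - apply cstar_lam; auto. apply IHt2; intros [|k]; simpl; [apply rt_refl | apply cstar_ren, H].
Qed.

Inductive cscoped : nat -> cterm -> Prop :=
| csc_var : forall n k, k < n -> cscoped n (CVar k)
| csc_u : forall n i, cscoped n (CU i)
| csc_pi : forall n A B, cscoped n A -> cscoped (S n) B -> cscoped n (CPi A B)
| csc_app : forall n A B, cscoped n A -> cscoped n B -> cscoped n (CApp A B)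
| csc_lam : forall n A B, cscoped n A -> cscoped (S n) B -> cscoped n (CLam A B).

Lemma csubst_ext_sc : forall n t, cscoped n t -> forall s r, (forall k, k < n -> s k = r k) ->
  csubst s t = csubst r t.
Proof.
  induction 1; intros s r H'; simpl; f_equal; auto;
  (apply IHcscoped2 || apply IHcscoped1 || idtac); intros [|k] Hk; simpl; auto;
  rewrite H'; auto; lia.
Qed.

Lemma cscoped_ren : forall n t, cscoped n t -> forall m xi, (forall k, k < n -> xi k < m) ->
  cscoped m (cren xi t).
Proof.
  induction 1; intros m xi H'; simpl; constructor; auto;
  (apply IHcscoped2 || apply IHcscoped1 || idtac); intros [|k] Hk; simpl; try lia;
  specialize (H' k); lia.
Qed.

Lemma cscoped_subst : forall n t, cscoped n t -> forall m s, (forall k, k < n -> cscoped m (s k)) ->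
  cscoped m (csubst s t).
Proof.
  assert (Hup : forall n m s, (forall k, k < n -> cscoped m (s k)) ->
     forall k, k < S n -> cscoped (S m) (cup s k)).
  { intros n m s H [|k] Hk; simpl. constructor; lia.
    apply cscoped_ren with m; [apply H; lia | intros; lia]. }
  induction 1; intros m s H'; simpl.
  - apply H'; auto.
  - constructor.
  - constructor; [auto | apply IHcscoped2; apply Hup; auto].
  - constructor; auto.
  - constructor; [auto | apply IHcscoped2; apply Hup; auto].
Qed.

Fixpoint dterm_ind' (P : dterm -> Prop)
  (HV : forall n, P (DVar n)) (HU : forall i, P (DU i))
  (HPi : forall A B, P A -> P B -> P (DPi A B))
  (HApp : forall A B, P A -> P B -> P (DApp A B))
  (HLab : forall l Ms, Forall P Ms -> P (DLab l Ms)) (t : dterm) : P t :=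
  match t with
  | DVar n => HV n
  | DU i => HU i
  | DPi A B => HPi A B (dterm_ind' P HV HU HPi HApp HLab A) (dterm_ind' P HV HU HPi HApp HLab B)
  | DApp A B => HApp A B (dterm_ind' P HV HU HPi HApp HLab A) (dterm_ind' P HV HU HPi HApp HLab B)
  | DLab l Ms => HLab l Ms
      ((fix F (Ms : list dterm) : Forall P Ms :=
         match Ms with
         | [] => Forall_nil P
         | M :: Ms' => Forall_cons M (dterm_ind' P HV HU HPi HApp HLab M) (F Ms')
         end) Ms)
  end.

Inductive good (D : lctx) : dterm -> Prop :=
| g_var : forall n, good D (DVar n)
| g_u : forall i, good D (DU i)
| g_pi : forall A B, good D A -> good D B -> good D (DPi A B)
| g_app : forall A B, good D A -> good D B -> good D (DApp A B)
| g_lab : forall l e Ms, lookup D l = Some e -> length Ms = length (lArgs e) ->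
    Forall (good D) Ms -> good D (DLab l Ms).

Inductive dscoped : nat -> dterm -> Prop :=
| dsc_var : forall n k, k < n -> dscoped n (DVar k)
| dsc_u : forall n i, dscoped n (DU i)
| dsc_pi : forall n A B, dscoped n A -> dscoped (S n) B -> dscoped n (DPi A B)
| dsc_app : forall n A B, dscoped n A -> dscoped n B -> dscoped n (DApp A B)
| dsc_lab : forall n l Ms, Forall (dscoped n) Ms -> dscoped n (DLab l Ms).

Fixpoint okD (D : lctx) : Prop :=
  match D with
  | [] => True
  | (l, e) :: D' => okD D' /\ lookup D' l = None /\ good D' (lArgTy e) /\ good D' (lBody e)
      /\ dscoped (length (lArgs e)) (lArgTy e) /\ dscoped (S (length (lArgs e))) (lBody e)
  end.

Lemma Forall_nth' : forall (A : Type) (P : A -> Prop) l d k, Forall P l -> P d -> P (nth k l d).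
Proof.
  intros A P l d k H Hd; revert k; induction H; intros [|k]; simpl; auto.
Qed.

Lemma good_ren : forall D t xi, good D t -> good D (dren xi t).
Proof.
  intros D t; induction t using dterm_ind'; intros xi Hg; inversion Hg; subst; simpl;
  try (econstructor; eauto; fail).
  econstructor; eauto. rewrite length_map; auto.
  rewrite Forall_map. rewrite Forall_forall in *. intros x Hx. apply H; auto.
Qed.

Lemma good_subst : forall D t s, good D t -> (forall k, good D (s k)) -> good D (dsubst s t).
Proof.
  intros D t; induction t using dterm_ind'; intros s Hg Hs; inversion Hg; subst; simpl; auto.
  - constructor; auto. apply IHt2; auto. intros [|k]; simpl. constructor. apply good_ren; auto.
  - constructor; auto.
  - econstructor; eauto. rewrite length_map; auto.
    rewrite Forall_map. rewrite Forall_forall in *. intros x Hx. apply H; auto.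
Qed.

Lemma good_cons : forall D l e t, lookup D l = None -> good D t -> good ((l, e) :: D) t.
Proof.
  intros D l e t Hl; induction t using dterm_ind'; intros Hg; inversion Hg; subst;
  try (constructor; auto; fail).
  apply g_lab with e0; auto.
  - simpl. destruct (Nat.eqb l0 l) eqn:E; auto. apply Nat.eqb_eq in E; subst; congruence.
  - rewrite Forall_forall in *. intros x Hx; auto.
Qed.

Lemma bgo_cons : forall D l e t, lookup D l = None -> good D t ->
  bgo (bhandler ((l, e) :: D)) t = bgo (bhandler D) t.
Proof.
  intros D l e t Hl; induction t using dterm_ind'; intros Hg; inversion Hg; subst; simpl; auto;
  try (f_equal; auto; fail).
  destruct (Nat.eqb l0 l) eqn:E.
  - apply Nat.eqb_eq in E; subst; congruence.
  - f_equal. apply map_ext_Forall. rewrite Forall_forall in *. intros x Hx; auto.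
Qed.

Definition HG (D : lctx) : Prop :=
  forall l e, lookup D l = Some e -> good D (lBody e) /\
    exists A0, cscoped (length (lArgs e)) A0 /\ cscoped (S (length (lArgs e))) (bt D (lBody e)) /\
    forall Ms, bhandler D l Ms = CLam (csubst (csig Ms) A0) (csubst (cup (csig Ms)) (bt D (lBody e))).

Lemma csig_map : forall f Ms k, k < length Ms -> csig (map f Ms) k = f (csig Ms k).
Proof.
  intros f Ms k Hk; unfold csig. rewrite <- map_rev, length_map.
  rewrite (nth_indep _ _ (f (CVar (k - length Ms)))); [apply map_nth |].
  rewrite length_map, length_rev; auto.
Qed.

Lemma csig_sc : forall m Ms k, Forall (cscoped m) Ms -> k < length Ms -> cscoped m (csig Ms k).
Proof.
  intros m Ms k H Hk; unfold csig. rewrite nth_indep with (d' := CU 0) by (rewrite length_rev; auto).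
  apply Forall_nth'; [ | constructor]. apply Forall_rev; auto.
Qed.

Lemma bgo_scoped : forall D, HG D -> forall t m, good D t -> dscoped m t -> cscoped m (bt D t).
Proof.
  intros D HD t; induction t using dterm_ind'; intros m Hg Hs; inversion Hg; subst;
  inversion Hs; subst; unfold bt in *; simpl; try (constructor; auto; fail).
  destruct (HD l e H2) as [_ [A0 [HA [HL Heq]]]]. rewrite Heq. constructor.
  - apply cscoped_subst with (length (lArgs e)); auto. intros k Hk. apply csig_sc.
    + rewrite Forall_map. rewrite Forall_forall in *. intros x Hx; auto.
    + rewrite length_map; lia.
  - apply cscoped_subst with (S (length (lArgs e))); auto. intros [|k] Hk; simpl.
    + constructor; lia.
    + apply cscoped_ren with m; [| intros; lia]. apply csig_sc.
      * rewrite Forall_map. rewrite Forall_forall in *. intros x Hx; auto.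
      * rewrite length_map; lia.
Qed.

Lemma okD_HG : forall D, okD D -> HG D.
Proof.
  induction D as [|[l e] D IH]; intros Hok l' e' Hl; simpl in Hl. discriminate.
  destruct Hok as [Hok [Hfr [HgA [HgL [HsA HsL]]]]].
  specialize (IH Hok).
  destruct (Nat.eqb l' l) eqn:E.
  - injection Hl; intros; subst. unfold bt; rewrite !bgo_cons with (D := D); auto.
    split; [apply good_cons; auto|].
    exists (bgo (bhandler D) (lArgTy e')). split; [|split].
    + apply bgo_scoped; auto.
    + apply bgo_scoped; auto.
    + intros Ms; simpl; rewrite E; auto.
  - destruct (IH l' e' Hl) as [Hg [A0 [HA [HL Heq]]]].
    unfold bt; rewrite !bgo_cons with (D := D); auto.
    split; [apply good_cons; auto|].
    exists A0; split; [|split]; auto. intros Ms; simpl; rewrite E; auto.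
Qed.

Lemma hcomm : forall D, HG D -> forall l e Ms s, lookup D l = Some e -> length Ms = length (lArgs e) ->
  bhandler D l (map (csubst s) Ms) = csubst s (bhandler D l Ms).
Proof.
  intros D HD l e Ms s Hl Hlen.
  destruct (HD l e Hl) as [_ [A0 [HA [HL Heq]]]]. rewrite !Heq. simpl. f_equal.
  - rewrite csubst_csubst. apply csubst_ext_sc with (length (lArgs e)); auto.
    intros k Hk. apply csig_map; lia.
  - rewrite csubst_csubst. apply csubst_ext_sc with (S (length (lArgs e))); auto.
    intros [|k] Hk; simpl; auto.
    rewrite csubst_cren, csig_map by lia. rewrite cren_csubst. apply csubst_ext; reflexivity.
Qed.

Lemma bgo_ren : forall D, HG D -> forall t xi, good D t -> bt D (dren xi t) = cren xi (bt D t).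
Proof.
  intros D HD t; induction t using dterm_ind'; intros xi Hg; inversion Hg; subst;
  unfold bt in *; simpl; try (f_equal; auto; fail).
  rewrite cren_var, <- hcomm with (e := e); auto; [| rewrite length_map; auto].
  f_equal. rewrite !map_map. apply map_ext_Forall.
  rewrite Forall_forall in *. intros x Hx. rewrite H; auto. apply cren_var.
Qed.

Lemma bgo_subst : forall D, HG D -> forall t s, good D t -> (forall k, good D (s k)) ->
  bt D (dsubst s t) = csubst (fun k => bt D (s k)) (bt D t).
Proof.
  intros D HD t; induction t using dterm_ind'; intros s Hg Hs; inversion Hg; subst;
  unfold bt in *; simpl; try (f_equal; auto; fail).
  - f_equal; auto. rewrite IHt2; auto.
    + apply csubst_ext; intros [|k]; simpl; auto. apply bgo_ren; auto.
    + intros [|k]; simpl. constructor. apply good_ren; auto.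
  - rewrite <- hcomm with (e := e); auto; [| rewrite length_map; auto].
    f_equal. rewrite !map_map. apply map_ext_Forall.
    rewrite Forall_forall in *. intros x Hx. rewrite H; auto.
Qed.

Lemma nth_step : forall L1 L2 a b d k, cstar a b ->
  cstar (nth k (L1 ++ a :: L2) d) (nth k (L1 ++ b :: L2) d).
Proof.
  induction L1; intros L2 a' b d [|k] H; simpl; auto; apply rt_refl.
Qed.

Lemma csig_step : forall L1 L2 a b k, cstar a b ->
  cstar (csig (L1 ++ a :: L2) k) (csig (L1 ++ b :: L2) k).
Proof.
  intros L1 L2 a b k H; unfold csig. rewrite !length_app; simpl.
  rewrite !rev_app_distr; simpl. rewrite <- !app_assoc; simpl. apply nth_step; auto.
Qed.

Lemma step_ok : forall D, okD D -> forall t u, dstep D t u -> good D t ->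
  good D u /\ cstar (bt D t) (bt D u).
Proof.
  intros D Hok. pose proof (okD_HG D Hok) as HD.
  induction 1; intros Hg; inversion Hg; subst.
  -
    inversion H2; subst. assert (e0 = e) by congruence; subst e0.
    destruct (HD l e H) as [HgL [A0 [HA [HL Heq]]]].
    assert (Hsg : forall k, good D (dsig (Ms ++ [N]) k)).
    { intros k; unfold dsig. apply Forall_nth'; [|constructor].
      apply Forall_rev, Forall_app; split; auto. }
    split; [apply good_subst; auto|].
    unfold bt at 1; simpl. rewrite Heq.
    eapply rt_trans; [apply rt_step, cs_beta|].
    rewrite bgo_subst; auto. rewrite csubst_csubst.
    replace (csubst (fun k => csubst (cbeta (bgo (bhandler D) N)) (cup (csig (map (bgo (bhandler D)) Ms)) k)) (bt D (lBody e)))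
      with (csubst (fun k => bt D (dsig (Ms ++ [N]) k)) (bt D (lBody e))); [apply rt_refl|].
    apply csubst_ext; intros [|k]; simpl.
    + unfold dsig; rewrite rev_app_distr; reflexivity.
    + rewrite csubst_cren; simpl; rewrite csubst_id.
      unfold dsig, csig; rewrite rev_app_distr, length_app; simpl.
      rewrite <- map_rev, length_map. rewrite Nat.add_1_r.
      change (CVar (k - length Ms)) with (bt D (DVar (k - length Ms))).
      unfold bt; rewrite map_nth. reflexivity.
  - destruct (IHdstep H2); split; [constructor; auto|]. unfold bt in *; simpl.
    apply cstar_pi; auto using rt_refl. apply rt_refl.
  - destruct (IHdstep H3); split; [constructor; auto|]. unfold bt in *; simpl.
    apply cstar_pi; auto. apply rt_refl.
  - destruct (IHdstep H2); split; [constructor; auto|]. unfold bt in *; simpl.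
    apply cstar_app; auto. apply rt_refl.
  - destruct (IHdstep H3); split; [constructor; auto|]. unfold bt in *; simpl.
    apply cstar_app; auto. apply rt_refl.
  - apply Forall_app in H4; destruct H4 as [H4a H4b]; inversion H4b; subst.
    destruct (IHdstep H4) as [Hg' Hs]. split.
    + econstructor; eauto. rewrite length_app in *; simpl in *; auto.
      apply Forall_app; split; auto.
    + destruct (HD l e H2) as [HgL [A0 [HA [HL Heq]]]].
      unfold bt in *; simpl. rewrite !Heq, !map_app; simpl.
      apply cstar_lam; apply cstar_subst_pt; auto.
      * intros k; apply csig_step; auto.
      * intros [|k]; simpl; [apply rt_refl|]. apply cstar_ren, csig_step; auto.
Qed.

Scheme wf_lctx_mind := Induction for wf_lctx Sort Prop
with wf_ctx_mind := Induction for wf_ctx Sort Prop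
with dtyped_mind := Induction for dtyped Sort Prop.
Combined Scheme typ_mutind from wf_lctx_mind, wf_ctx_mind, dtyped_mind.

Lemma typ_ok :
  (forall D, wf_lctx D -> okD D) /\
  (forall D G, wf_ctx D G -> okD D /\ forall A G', G = A :: G' -> good D A /\ dscoped (length G') A) /\
  (forall D G t T, dtyped D G t T -> okD D /\ good D t /\ dscoped (length G) t).
Proof.
  apply typ_mutind; intros; simpl;
  repeat match goal with H : _ /\ _ |- _ => destruct H end.
  - auto.
  - match goal with Hh : forall A G', _ = _ -> _ |- _ =>
      destruct (Hh _ _ eq_refl) as [HgA HsA] end.
    rewrite length_rev in HsA.
    match goal with H : dscoped (length (_ :: _)) _ |- _ => simpl in H; rewrite length_rev in H end.
    auto 10.
  - split; auto. intros; discriminate.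
  - split; auto. intros A0 G' E; injection E; intros; subst; auto.
  - split; [|split]; auto; constructor.
    apply nth_error_Some; congruence.
  - split; [|split]; auto; constructor.
  - split; [|split]; auto; constructor; auto.
  - split; [|split]; auto; constructor; auto.
  - split; [|split]; auto.
  - split; [|split]; auto.
    + econstructor; eauto. apply Forall_nth. intros i0 d0 Hi.
      rewrite nth_indep with (d' := DU 0) by auto. match goal with H : forall k, _ -> _ /\ _ |- _ => apply H; auto end.
    + constructor. apply Forall_nth. intros i0 d0 Hi.
      rewrite nth_indep with (d' := DU 0) by auto. match goal with H : forall k, _ -> _ /\ _ |- _ => apply H; auto end.
Qed.

Theorem lemma3p20 : forall (D : lctx) (G : list dterm) (M A N : dterm),
  dtyped D G M A -> dstar D M N -> cstar (bt D M) (bt D N).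
Proof.
  intros D G M A N Ht Hs.
  destruct typ_ok as [_ [_ H]]. destruct (H _ _ _ _ Ht) as [Hok [Hg _]].
  assert (forall M N, dstar D M N -> good D M -> good D N /\ cstar (bt D M) (bt D N)).
  { clear H Ht Hs Hg. intros M0 N0 Hs; induction Hs; intros Hg.
    - apply step_ok; auto.
    - split; auto; apply rt_refl.
    - destruct (IHHs1 Hg) as [Hg1 ?]; destruct (IHHs2 Hg1); split; auto; eapply rt_trans; eauto. }
  apply H0; auto.
Qed.
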